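(* For every positive integer $r$, $\mathcal{I}_B(r)$ is a di-ideal of $\mathcal{B}_\Sigma$.
   Context: Let $\mathbf{k}$ be a field of characteristic $0$ and $B=\bigoplus_{d\ge0}B_d$ a commutative graded $\mathbf{k}$-algebra with $B_0=\mathbf{k}$, generated by $B_1$, $\dim B_1<\infty$. Let $\mathcal{B}_\Sigma=\bigoplus_{n,d}\mathrm{Sym}^n(B_d)$, with product $\cdot$ the multiplication of $\mathrm{Sym}(B_d)$ (zero between different $d$) and comultiplication $\Delta(w_1\cdots w_n)=\sum_{S\subseteq[n]}w_S\otimes w_{[n]\setminus S}$, $w_S=\prod_{i\in S}w_i$. Let $\mathcal{B}^\Sigma=\bigoplus_{n,d}(B_d^{\otimes n})^{\Sigma_n}$ with product $*$ given by factorwise multiplication $(u_1\otimes\cdots\otimes u_n)*(v_1\otimes\cdots\otimes v_n)=u_1v_1\otimes\cdots\otimes u_nv_n$ from $(B_d^{\otimes n})^{\Sigma_n}\otimes(B_e^{\otimes n})^{\Sigma_n}$ to $(B_{d+e}^{\otimes n})^{\Sigma_n}$ (zero for different $n$). $\mathfrak{S}:\mathrm{Sym}^n(B_d)\to(B_d^{\otimes n})^{\Sigma_n}$, $w_1\cdots w_n\mapsto\sum_{\tau\in\Sigma_n}w_{\tau(1)}\otimes\cdots\otimes w_{\tau(n)}$. An ideal of $\mathcal{B}_\Sigma$ is a bihomogeneous subspace closed under $\cdot$-multiplication by $\mathcal{B}_\Sigma$; it is a di-ideal if moreover $g*f\in\mathfrak{S}(\mathcal{I})$ for all $f\in\mathfrak{S}(\mathcal{I})$,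 $g\in\mathcal{B}^\Sigma$. The join of ideals: $(\mathcal{I}\star\mathcal{J})_{d,n}$ is the kernel of $\mathrm{Sym}^n(B_d)\xrightarrow{\Delta}\bigoplus_{i=0}^n(\mathcal{B}_\Sigma/\mathcal{I})_{d,i}\otimes(\mathcal{B}_\Sigma/\mathcal{J})_{d,n-i}$. Define $\mathcal{I}_B(1)\subseteq\mathcal{B}_\Sigma$ by $\mathcal{I}_B(1)_{d,n}=\ker(\mathrm{Sym}^n(B_d)\to B_{dn})$ (the map induced by multiplication in $B$), and $\mathcal{I}_B(r)=\mathcal{I}_B(1)^{\star r}$ ($r$-fold join). *)

(* Defs.v *)
From HB Require Import structures.
From mathcomp Require Import all_boot all_order all_algebra all_fingroup.
From mathcomp Require Import mpoly.
Set Implicit Arguments. Unset Strict Implicit. Unset Printing Implicit Defensive.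
Import GRing.Theory.
Local Open Scope ring_scope.

(* A commutative graded k-algebra B = (+)_d B_d, described inside a           *)
(* commutative k-algebra B together with, for each degree d, a finite basis   *)
(* gbas d : 'I_(gdim d) -> B of B_d and the coordinate functionals gcrd d.    *)
(* An element of B_d is represented by its coordinate vector 'I_(gdim d) -> k. *)
Record gradedData (k : fieldType) (B : comAlgType k) := GradedData {
  gdim : nat -> nat;
  gbas : forall d, 'I_(gdim d) -> B;
  gcrd : forall d, B -> 'I_(gdim d) -> k
}.

Arguments gdim {k B} g d.
Arguments gbas {k B} g d j.
Arguments gcrd {k B} g d _ j.

Section Graded.
Variables (k : fieldType) (B : comAlgType k) (G : gradedData B).

Local Notation N := (gdim G).

Definition gvec (d : nat) (c : 'I_(N d) -> k) : B := \sum_(j < N d) c j *: gbas G d j.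

(* The axioms: B = (+)_d B_d is a graded commutative k-algebra, B_0 = k,
   generated by B_1 (and dim B_1 = gdim 1 < oo). *)
Definition is_graded_alg : Prop :=
  (forall d (c : 'I_(N d) -> k) i, gcrd G d (gvec c) i = c i) /\
  (forall x : B, exists (D : nat) (c : forall d, 'I_(N d) -> k),
      x = \sum_(d < D) gvec (c d)) /\
  (forall (D : nat) (c : forall d, 'I_(N d) -> k),
      \sum_(d < D) gvec (c d) = 0 -> forall d, (d < D)%N -> forall i, c d i = 0) /\
  (forall d e (i : 'I_(N d)) (j : 'I_(N e)),
      exists c : 'I_(N (d + e)) -> k, gbas G d i * gbas G e j = gvec c) /\
  (exists c : 'I_(N 0) -> k, gvec c = 1) /\
  (forall c : 'I_(N 0) -> k, exists a : k, gvec c = a%:A) /\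
  (forall d (i : 'I_(N d)), exists c : {ffun 'I_d -> 'I_(N 1)} -> k,
      gbas G d i = \sum_(t : {ffun 'I_d -> 'I_(N 1)}) c t *: \prod_(j < d) gbas G 1 (t j)).

(* ---------------- Sym(B_d) = {mpoly k[N d]} ('X_j <-> gbas d j) ------------ *)

Definition symlin d (v : 'I_(N d) -> k) : {mpoly k[N d]} := \sum_(j < N d) v j *: 'X_j.

(* the map Sym^n(B_d) -> B_{dn} induced by multiplication in B
   (composed with the inclusion B_{dn} \subset B) *)
Definition symev d (p : {mpoly k[N d]}) : B := mmap (in_alg B) (gbas G d) p.

(* Sym(B_d) (x) Sym(B_d) = {mpoly k[N d + N d]}, left factor on the variables
   'X_(lshift _ j), right factor on the variables 'X_(rshift _ j). *)
Definition tleft d (p : {mpoly k[N d]}) : {mpoly k[N d + N d]} :=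
  mmap (@mpolyC _ _) (fun j => 'X_(lshift (N d) j)) p.
Definition tright d (p : {mpoly k[N d]}) : {mpoly k[N d + N d]} :=
  mmap (@mpolyC _ _) (fun j => 'X_(rshift (N d) j)) p.
(* the comultiplication: Delta(w_1...w_n) = sum_S w_S (x) w_{[n]\S}, i.e. the
   variables are primitive: Delta(X_j) = X_j (x) 1 + 1 (x) X_j *)
Definition comult d (p : {mpoly k[N d]}) : {mpoly k[N d + N d]} :=
  mmap (@mpolyC _ _) (fun j => 'X_(lshift (N d) j) + 'X_(rshift (N d) j)) p.

(* A bihomogeneous subset of B_Sigma : its (d,n) components, subsets of
   Sym^n(B_d). *)
Definition family := forall d : nat, nat -> {mpoly k[N d]} -> Prop.

Definition is_ideal (I : family) : Prop :=
  forall d n,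
    (forall p, I d n p -> p \is n.-homog) /\
    I d n 0 /\
    (forall p q, I d n p -> I d n q -> I d n (p + q)) /\
    (forall (a : k) p, I d n p -> I d n (a *: p)) /\
    (forall p q m, I d n p -> q \is m.-homog -> I d (n + m)%N (q * p)).

Definition in_span (V : lmodType k) (P : V -> Prop) (x : V) : Prop :=
  exists s : seq (k * V), foldr (fun y Q => P y.2 /\ Q) True s /\
    x = \sum_(y <- s) y.1 *: y.2.

(* kernel of (B_Sigma/I)_{d,i} (x) (B_Sigma/J)_{d,n-i}, i = 0..n, inside
   Sym(B_d) (x) Sym(B_d):  sum_i  I_{d,i} (x) Sym^{n-i} + Sym^i (x) J_{d,n-i} *)
Definition join_gen (I J : family) d n (x : {mpoly k[N d + N d]}) : Prop :=
  exists i : nat, (i <= n)%N /\ exists a b : {mpoly k[N d]},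
    x = tleft a * tright b /\
    ((I d i a /\ b \is (n - i)%N.-homog) \/ (a \is i.-homog /\ J d (n - i)%N b)).

Definition join (I J : family) : family := fun d n p =>
  p \is n.-homog /\ in_span (@join_gen I J d n) (comult p).

Definition IB1 : family := fun d n p => p \is n.-homog /\ symev p = 0.

(* I_B(r) = I_B(1) * ... * I_B(1)  (r factors, r >= 1) *)
Definition IB (r : nat) : family := iter r.-1 (fun I => join I IB1) IB1.

(* T t = coefficient of gbas d (t 0) (x) ... (x) gbas d (t (n-1)) *)
Definition tensor d n := {ffun 'I_n -> 'I_(N d)} -> k.

Definition is_sym_tensor d n (T : tensor d n) : Prop :=
  forall (s : 'S_n) (t : {ffun 'I_n -> 'I_(N d)}), T [ffun i => t (s i)] = T t.

(* structure constants: gbas d i * gbas e j = sum_l mu i j l * gbas (d+e) l *)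
Definition mu d e (i : 'I_(N d)) (j : 'I_(N e)) (l : 'I_(N (d + e))) : k :=
  gcrd G (d + e) (gbas G d i * gbas G e j) l.

(* factorwise product (u_1 (x)..(x) u_n) * (v_1 (x)..(x) v_n) = u_1v_1 (x)..(x) u_nv_n *)
Definition tmul d e n (T : tensor d n) (U : tensor e n) : tensor (d + e) n :=
  fun t => \sum_(t1 : {ffun 'I_n -> 'I_(N d)}) \sum_(t2 : {ffun 'I_n -> 'I_(N e)})
    T t1 * U t2 * \prod_(i < n) mu (t1 i) (t2 i) (t i).

(* An element of Sym^n(B_d) given as sum_(c,w) c * w_1 ... w_n (w_i in B_d
   given by coordinates); every element of Sym^n(B_d) has such a representation. *)
Definition symrep d n (s : seq (k * ('I_n -> 'I_(N d) -> k))) : {mpoly k[N d]} :=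
  \sum_(y <- s) y.1 *: \prod_(i < n) symlin (y.2 i).

(* The symmetrization map S : w_1...w_n |-> sum_tau w_tau(1) (x) ... (x) w_tau(n),
   applied to the same representation. *)
Definition Srep d n (s : seq (k * ('I_n -> 'I_(N d) -> k))) : tensor d n :=
  fun t => \sum_(y <- s) y.1 * \sum_(tau : 'S_n) \prod_(i < n) y.2 (tau i) (t i).

Definition in_SI (I : family) d n (T : tensor d n) : Prop :=
  exists s, I d n (symrep s) /\ forall t, Srep s t = T t.

Definition is_diideal (I : family) : Prop :=
  is_ideal I /\
  forall d e n (f : tensor d n) (g : tensor e n),
    in_SI I f -> is_sym_tensor g -> in_SI I (tmul g f).

End Graded.

Arguments IB {k B} G r.
Arguments IB1 {k B} G.

(* Main.v *)
Require Import Defs.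
From HB Require Import structures.
From mathcomp Require Import all_boot all_order all_algebra all_fingroup.
From mathcomp Require Import mpoly.
From mathcomp Require Import zify.
Set Implicit Arguments. Unset Strict Implicit. Unset Printing Implicit Defensive.
Import GRing.Theory.
Local Open Scope ring_scope.

Section Span.
Variables (k : fieldType).

Lemma foldrP (V : lmodType k) (P : V -> Prop) (s : seq (k * V)) :
  foldr (fun y Q => P y.2 /\ Q) True s <-> (forall y, y \in s -> P y.2).
Proof.
elim: s => [|y s IH] /=; first by split.
split=> [[Py /IH H] z|H]; first by rewrite inE => /orP[/eqP->|/H].
split; first by apply: H; rewrite inE eqxx.
by apply/IH => z zs; apply: H; rewrite inE zs orbT.
Qed.

Lemma spanE (V : lmodType k) (P : V -> Prop) x :
  in_span P x <-> exists s : seq (k * V), (forall y, y \in s -> P y.2) /\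
    x = \sum_(y <- s) y.1 *: y.2.
Proof.
split=> [[s [/foldrP H E]]|[s [H E]]]; exists s; split=> //; exact/foldrP.
Qed.

Lemma span_in (V : lmodType k) (P : V -> Prop) x : P x -> in_span P x.
Proof.
move=> Px; apply/spanE; exists [:: (1, x)]; split.
  by move=> y; rewrite inE => /eqP ->.
by rewrite big_seq1 scale1r.
Qed.

Lemma span0 (V : lmodType k) (P : V -> Prop) : in_span P 0.
Proof. by apply/spanE; exists [::]; rewrite big_nil. Qed.

Lemma spanD (V : lmodType k) (P : V -> Prop) x y : in_span P x -> in_span P y -> in_span P (x + y).
Proof.
move=> /spanE[s [Hs ->]] /spanE[t [Ht ->]]; apply/spanE; exists (s ++ t); split.
  by move=> z; rewrite mem_cat => /orP[/Hs|/Ht].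
by rewrite big_cat.
Qed.

Lemma spanZ (V : lmodType k) (P : V -> Prop) a x : in_span P x -> in_span P (a *: x).
Proof.
move=> /spanE[s [Hs ->]]; apply/spanE.
exists [seq (a * y.1, y.2) | y <- s]; split.
  move=> z /mapP[y ys ->] /=; exact: Hs.
by rewrite big_map scaler_sumr; apply: eq_bigr => y _; rewrite scalerA.
Qed.

Lemma span_sum (V : lmodType k) (P : V -> Prop) (I : eqType) (r : seq I) (F : I -> V) :
  (forall i, i \in r -> in_span P (F i)) -> in_span P (\sum_(i <- r) F i).
Proof.
elim: r => [|i r IH] H; first by rewrite big_nil; apply: span0.
rewrite big_cons; apply: spanD; first by apply: H; rewrite inE eqxx.
by apply: IH => j jr; apply: H; rewrite inE jr orbT.
Qed.

Lemma span_map (V : lmodType k) (W : lmodType k) (P : V -> Prop) (Q : W -> Prop) (f : V -> W) x :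
  f 0 = 0 -> {morph f : u v / u + v} -> (forall a u, f (a *: u) = a *: f u) ->
  (forall u, P u -> in_span Q (f u)) -> in_span P x -> in_span Q (f x).
Proof.
move=> f0 fD fZ H /spanE[s [Hs ->]].
elim: s Hs => [|y s IH] Hs; first by rewrite big_nil f0; apply: span0.
rewrite big_cons fD fZ; apply: spanD; first by apply/spanZ/H/Hs; rewrite inE eqxx.
by apply: IH => z zs; apply: Hs; rewrite inE zs orbT.
Qed.

End Span.
Lemma mmap_ext n (R S : ringType) (f : R -> S) (h1 h2 : 'I_n -> S) p :
  h1 =1 h2 -> mmap f h1 p = mmap f h2 p.
Proof. by move=> e; rewrite /mmap; apply: eq_bigr => m _; rewrite (mmap1_eq _ e). Qed.

Lemma mmap_comp n m (R : comRingType) (S : comRingType) (f : {rmorphism R -> S})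
  (h1 : 'I_n -> {mpoly R[m]}) (h2 : 'I_m -> S) p :
  mmap f h2 (mmap (@mpolyC _ _) h1 p) = mmap f (fun i => mmap f h2 (h1 i)) p.
Proof.
rewrite [mmap _ h1 p]/mmap raddf_sum [RHS]/mmap; apply: eq_bigr => mm _.
rewrite /= rmorphM /= mmapC /mmap1 rmorph_prod; congr (_ * _).
by apply: eq_bigr => i _; rewrite rmorphXn.
Qed.

Lemma mmap1_homog n m (R : comRingType) (h : 'I_n -> {mpoly R[m]}) (mm : 'X_{1..n}) :
  (forall i, h i \is 1.-homog) -> mmap1 h mm \is (mdeg mm).-homog.
Proof.
move=> hh; rewrite mdegE /mmap1.
apply: (big_ind2 (fun q (e : nat) => q \is e.-homog)).
- exact: dhomog1.
- by move=> x1 x2 y1 y2 ? ?; apply: dhomogM.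
- by move=> i _; rewrite -[X in X.-homog]mul1n; apply: dhomogMn.
Qed.

Lemma mmap_homog n m (R : comRingType) (h : 'I_n -> {mpoly R[m]}) d p :
  (forall i, h i \is 1.-homog) -> p \is d.-homog ->
  mmap (@mpolyC _ _) h p \is d.-homog.
Proof.
move=> hh /dhomogP hp; rewrite /mmap big_seq; apply: rpred_sum => mm Hm.
rewrite mul_mpolyC; apply: rpredZ.
rewrite -(hp _ Hm); exact: mmap1_homog.
Qed.

Lemma X_homog n (R : comRingType) (i : 'I_n) : ('X_i : {mpoly R[n]}) \is 1.-homog.
Proof. by rewrite dhomogX; apply/eqP; exact: mdeg1. Qed.

Section Main.
Variables (k : fieldType) (B : comAlgType k) (G : gradedData B).
Local Notation N := (gdim G).

Lemma ideal_sum (I : Defs.family G) (HI : is_ideal I) d n (T : eqType) (r : seq T)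
  (F : T -> {mpoly k[N d]}) :
  (forall x, x \in r -> I d n (F x)) -> I d n (\sum_(x <- r) F x).
Proof.
have [_ [I0 [ID _]]] := HI d n.
elim: r => [|x r IH] H; first by rewrite big_nil.
rewrite big_cons; apply: ID; first by apply: H; rewrite inE eqxx.
by apply: IH => y yr; apply: H; rewrite inE yr orbT.
Qed.

Lemma IB1_ideal : is_ideal (IB1 G).
Proof.
move=> d n; split; first by move=> p [].
split; first by split; [exact: dhomog0 | rewrite /symev raddf0].
split; first by move=> p q [hp ep] [hq eq]; split; [exact: rpredD | rewrite /symev raddfD /= -/(symev _) -/(symev _) ep eq addr0].
split; first by move=> a p [hp ep]; split; [exact: rpredZ | rewrite /symev mmapZ -/(symev _) ep mulr0].
move=> p q m [hp ep] hq; split; first by rewrite addnC; exact: dhomogM.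
by rewrite /symev in ep *; rewrite rmorphM /= ep mulr0.
Qed.

Definition mL d (mm : 'X_{1..N d + N d}) : 'X_{1..N d} := [multinom mm (lshift _ i) | i < N d].
Definition mR d (mm : 'X_{1..N d + N d}) : 'X_{1..N d} := [multinom mm (rshift _ i) | i < N d].

Lemma Xsplit d (mm : 'X_{1..N d + N d}) :
  'X_[mm] = @tleft _ _ G d 'X_[mL mm] * @tright _ _ G d 'X_[mR mm].
Proof.
rewrite /tleft /tright !mmapX /mmap1 mpolyXE_id big_split_ord /=; congr (_ * _).
  by apply: eq_bigr => i _; rewrite mnmE.
by apply: eq_bigr => i _; rewrite mnmE.
Qed.

Lemma mdeg_split d (mm : 'X_{1..N d + N d}) :
  mdeg mm = (mdeg (mL mm) + mdeg (mR mm))%N.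
Proof.
rewrite !mdegE big_split_ord /=; congr (_ + _)%N.
  by apply: eq_bigr => i _; rewrite mnmE.
by apply: eq_bigr => i _; rewrite mnmE.
Qed.

Lemma poly_split d (P : {mpoly k[N d + N d]}) :
  P = \sum_(mm <- msupp P) P@_mm *: (@tleft _ _ G d 'X_[mL mm] * @tright _ _ G d 'X_[mR mm]).
Proof.
by rewrite {1}[P]mpolyE; apply: eq_bigr => mm _; rewrite -Xsplit.
Qed.

Lemma comult_homog d m (q : {mpoly k[N d]}) : q \is m.-homog -> @comult _ _ G d q \is m.-homog.
Proof. by move=> hq; apply: mmap_homog => // i; apply: rpredD; apply: X_homog. Qed.

Lemma join_ideal (I J : Defs.family G) : is_ideal I -> is_ideal J -> is_ideal (join I J).
Proof.
move=> HI HJ d n; split; first by move=> p [].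
split; first by split; [exact: dhomog0 | rewrite /comult raddf0; apply: span0].
split.
  move=> p q [hp sp] [hq sq]; split; first exact: rpredD.
  by rewrite /comult raddfD /= -!/(comult _); apply: spanD.
split.
  move=> a p [hp sp]; split; first exact: rpredZ.
  by rewrite /comult mmapZ -/(comult _) mul_mpolyC; apply: spanZ.
move=> p q m [hp sp] hq; split; first by rewrite addnC; exact: dhomogM.
have hcq := comult_homog hq.
rewrite /comult rmorphM /= -!/(comult _).
rewrite [comult q]poly_split.
set Q := \sum_(mm <- _) _.
have -> : Q * comult p = (fun x => Q * x) (comult p) by [].
apply: (span_map (P := join_gen I J n)) => //.
- exact: mulr0.
- by move=> x y; rewrite mulrDr.
- by move=> a x; rewrite scalerAr.
move=> y [i [lein [a [b [-> Hab]]]]].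
rewrite /Q mulr_suml; apply: span_sum => mm Hmm.
rewrite -scalerAl; apply: spanZ; apply: span_in.
have Em : mdeg mm = m by move/dhomogP: hcq => /(_ mm Hmm).
have Es := mdeg_split mm.
rewrite mulrACA -!rmorphM /=.
exists (i + mdeg (mL mm))%N; split; first by lia.
exists ('X_[mL mm] * a); exists ('X_[mR mm] * b); split; first by [].
have -> : (n + m - (i + mdeg (mL mm)) = mdeg (mR mm) + (n - i))%N by lia.
case: Hab => [[Ia hb]|[ha Jb]].
  left; split.
    have := (HI d i).2.2.2.2 a 'X_[mL mm] (mdeg (mL mm)) Ia.
    by rewrite dhomogX => /(_ (eqxx _)).
  by apply: dhomogM => //; rewrite dhomogX.
right; split.
  by rewrite addnC; apply: dhomogM => //; rewrite dhomogX.
rewrite addnC; have := (HJ d (n - i)%N).2.2.2.2 b 'X_[mR mm] (mdeg (mR mm)) Jb.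
by rewrite dhomogX => /(_ (eqxx _)).
Qed.


Definition lin d e (v : 'I_(N e) -> k) (j : 'I_(N d)) : {mpoly k[N (e + d)]} :=
  @symlin _ _ G (e + d) (fun l => \sum_(a < N e) v a * @mu _ _ G e d a j l).
Definition sig d e (v : 'I_(N e) -> k) (p : {mpoly k[N d]}) : {mpoly k[N (e + d)]} :=
  mmap (@mpolyC _ _) (@lin d e v) p.

Lemma mmap_symlin n m (h : 'I_n -> {mpoly k[m]}) (c : 'I_n -> k) :
  mmap (@mpolyC _ _) h (\sum_(j < n) c j *: 'X_j) = \sum_(j < n) c j *: h j.
Proof.
rewrite raddf_sum; apply: eq_bigr => j _.
by rewrite /= mmapZ mmapX mmap1U mul_mpolyC.
Qed.

Lemma symlin_homog d (c : 'I_(N d) -> k) : @symlin _ _ G d c \is 1.-homog.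
Proof. by apply: rpred_sum => j _; apply/rpredZ/X_homog. Qed.

Lemma sig_homog d e v n p : p \is n.-homog -> @sig d e v p \is n.-homog.
Proof. by move=> hp; apply: mmap_homog => // j; apply: symlin_homog. Qed.

Lemma gvec_gcrd (HB : is_graded_alg G) e d (a : 'I_(N e)) (j : 'I_(N d)) :
  gvec (gcrd G (e + d) (gbas G e a * gbas G d j)) = gbas G e a * gbas G d j.
Proof.
have [c Ec] := HB.2.2.2.1 e d a j.
rewrite Ec /gvec; apply: eq_bigr => l _; congr (_ *: _); exact: HB.1.
Qed.

Lemma symev_symlin d (c : 'I_(N d) -> k) : symev (@symlin _ _ G d c) = gvec c.
Proof.
rewrite /symev /symlin raddf_sum; apply: eq_bigr => j _.
by rewrite /= mmapZ mmapX mmap1U; exact: mulr_algl.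
Qed.

Lemma symev_lin (HB : is_graded_alg G) d e v (j : 'I_(N d)) :
  symev (@lin d e v j) = gvec v * gbas G d j.
Proof.
rewrite /lin symev_symlin /gvec mulr_suml.
under eq_bigr do rewrite scaler_suml.
rewrite exchange_big /=; apply: eq_bigr => a _.
rewrite -scalerAl -(gvec_gcrd HB) /gvec scaler_sumr; apply: eq_bigr => l _.
by rewrite scalerA.
Qed.

Lemma mmap_scale n (R : comRingType) (S : comRingType) (f : {rmorphism R -> S})
  (u : S) (h : 'I_n -> S) (p : {mpoly R[n]}) d :
  p \is d.-homog -> mmap f (fun j => u * h j) p = u ^+ d * mmap f h p.
Proof.
move=> /dhomogP hp; rewrite /mmap mulr_sumr big_seq [RHS]big_seq.
apply: eq_bigr => mm Hm; rewrite mulrCA; congr (_ * _).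
rewrite /mmap1; under eq_bigr do rewrite exprMn.
rewrite big_split /= prodrXr; congr (_ ^+ _ * _).
by rewrite -(hp _ Hm); exact: (esym (mdegE mm)).
Qed.

Lemma symev_sig (HB : is_graded_alg G) d e v n (p : {mpoly k[N d]}) :
  p \is n.-homog -> symev (@sig d e v p) = gvec v ^+ n * symev p.
Proof.
move=> hp; rewrite /symev /sig mmap_comp.
rewrite (mmap_ext _ (h2 := fun j => gvec v * gbas G d j)); last first.
  by move=> j; rewrite -(symev_lin HB).
exact: mmap_scale.
Qed.

Definition sig_closed (I : Defs.family G) :=
  forall d e n v p, I d n p -> I (e + d)%N n (@sig d e v p).

Lemma IB1_sig (HB : is_graded_alg G) : sig_closed (IB1 G).
Proof.
move=> d e n v p [hp ep]; split; first exact: sig_homog.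
by rewrite (symev_sig HB _ hp) ep mulr0.
Qed.


Definition TT d e (v : 'I_(N e) -> k) (P : {mpoly k[N d + N d]}) :
    {mpoly k[N (e + d) + N (e + d)]} :=
  mmap (@mpolyC _ _) (fun x => match split x with
     | inl j => @tleft _ _ G (e + d) (@lin d e v j)
     | inr j => @tright _ _ G (e + d) (@lin d e v j) end) P.

Lemma split_l m n (j : 'I_m) : split (lshift n j) = inl j.
Proof. exact: (unsplitK (inl j)). Qed.
Lemma split_r m n (j : 'I_n) : split (rshift m j) = inr j.
Proof. exact: (unsplitK (inr j)). Qed.

Lemma comult_sig d e v (p : {mpoly k[N d]}) :
  @comult _ _ G (e + d) (@sig d e v p) = @TT d e v (@comult _ _ G d p).
Proof.
rewrite /comult /sig /TT !mmap_comp; apply: mmap_ext => j.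
rewrite raddfD /= !mmapX !mmap1U split_l split_r.
rewrite /lin /symlin /tleft /tright !mmap_symlin -big_split /=.
by apply: eq_bigr => l _; rewrite scalerDr.
Qed.

Lemma TT_tt d e v (a b : {mpoly k[N d]}) :
  @TT d e v (@tleft _ _ G d a * @tright _ _ G d b) =
  @tleft _ _ G (e + d) (@sig d e v a) * @tright _ _ G (e + d) (@sig d e v b).
Proof.
rewrite /TT rmorphM /=; congr (_ * _).
  rewrite /tleft /sig !mmap_comp; apply: mmap_ext => j.
  by rewrite mmapX mmap1U split_l.
rewrite /tright /sig !mmap_comp; apply: mmap_ext => j.
by rewrite mmapX mmap1U split_r.
Qed.

Lemma join_sig (I J : Defs.family G) : sig_closed I -> sig_closed J ->
  sig_closed (join I J).
Proof.
move=> HI HJ d e n v p [hp sp]; split; first exact: sig_homog.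
rewrite comult_sig.
apply: (span_map (P := join_gen I J n)) => //.
- by rewrite /TT raddf0.
- by move=> x y; rewrite /TT raddfD.
- by move=> a x; rewrite /TT mmapZ mul_mpolyC.
move=> y [i [lein [a [b [-> Hab]]]]]; apply: span_in.
rewrite TT_tt; exists i; split=> //; exists (sig v a); exists (sig v b); split=> //.
case: Hab => [[Ia hb]|[ha Jb]].
  by left; split; [exact: HI | exact: sig_homog].
by right; split; [exact: sig_homog | exact: HJ].
Qed.

Lemma IB_ideal_sig (HB : is_graded_alg G) r :
  is_ideal (IB G r.+1) /\ sig_closed (IB G r.+1).
Proof.
elim: r => [|r [IHi IHs]]; first by split; [exact: IB1_ideal | exact: IB1_sig].
have -> : IB G r.+2 = join (IB G r.+1) (IB1 G) by [].
split; first exact: join_ideal IHi IB1_ideal.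
exact: join_sig IHs (IB1_sig HB).
Qed.

End Main.



Section Ryser.
Variable A : comNzRingType.

Lemma prod_nat_bool (I : finType) (b : I -> bool) :
  \prod_i ((b i)%:R : A) = ([forall i, b i])%:R.
Proof.
case: (boolP [forall i, b i]) => [/forallP H | /forallPn [i Hi]].
  by rewrite big1 // => i _; rewrite H.
by rewrite (bigD1 i) //= (negbTE Hi) mul0r.
Qed.

Lemma surj_inj n (f : {ffun 'I_n -> 'I_n}) :
  [forall x, x \in codom f] = injectiveb f.
Proof.
apply/idP/idP.
  move=> /forallP H; rewrite /injectiveb /dinjectiveb.
  apply: (@leq_size_uniq _ (enum 'I_n)); first exact: enum_uniq.
    by move=> x _; exact: H.
  by rewrite size_map.
move=> /injectiveP inj; apply/forallP => x; exact: inj_card_onto.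
Qed.

Lemma ryser n (a : 'I_n -> 'I_n -> A) :
  \sum_(eps : {ffun 'I_n -> bool})
     (\prod_x (if eps x then 1 else -1)) * \prod_i \sum_(j | eps j) a i j
  = \sum_(s : 'S_n) \prod_i a i (s i).
Proof.
have E1 : forall eps : {ffun 'I_n -> bool}, \prod_i \sum_(j | eps j) a i j =
   \sum_(f : {ffun 'I_n -> 'I_n}) (\prod_i ((eps (f i))%:R : A)) * \prod_i a i (f i).
  move=> eps.
  have Ei : forall i, \sum_(j | eps j) a i j = \sum_j (eps j)%:R * a i j.
    by move=> i; rewrite big_mkcond; apply: eq_bigr => j _; case: (eps j); rewrite ?mul1r ?mul0r.
  under eq_bigr do rewrite Ei.
  rewrite bigA_distr_bigA; apply: eq_bigr => f _; by rewrite big_split.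
under eq_bigr do rewrite E1 mulr_sumr.
rewrite exchange_big /=.
have E2 : forall f : {ffun 'I_n -> 'I_n},
  \sum_(eps : {ffun 'I_n -> bool}) (\prod_x (if eps x then 1 else -1)) *
     ((\prod_i ((eps (f i))%:R : A)) * \prod_i a i (f i))
  = (injectiveb f)%:R * \prod_i a i (f i).
  move=> f; rewrite -surj_inj -(prod_nat_bool (fun x => x \in codom f)).
  transitivity ((\sum_(eps : {ffun 'I_n -> bool}) (\prod_x (if eps x then 1 else -1)) *
     \prod_i ((eps (f i))%:R : A)) * \prod_i a i (f i)).
    by rewrite big_distrl; apply: eq_bigr => eps _; rewrite mulrA.
  congr (_ * _).
  rewrite (eq_bigr (fun eps : {ffun 'I_n -> bool} => \prod_x ((if eps x then 1 else -1) * (((x \in codom f) ==> eps x))%:R : A))); last first.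
    move=> eps _.
    rewrite (prod_nat_bool (fun i => eps (f i))).
    rewrite (_ : [forall i, eps (f i)] = [forall x, (x \in codom f) ==> eps x]); last first.
      apply/forallP/forallP => H x.
        by apply/implyP => /codomP [i ->].
      by apply: (implyP (H (f x))); apply: codom_f.
    by rewrite -(prod_nat_bool (fun x => (x \in codom f) ==> eps x)) -big_split.
  rewrite /= -(bigA_distr_bigA (fun x (b : bool) => (if b then 1 else -1) * (((x \in codom f) ==> b))%:R : A)).
  apply: eq_bigr => x _; rewrite big_bool /= implybT mul1r.
  by case: (x \in codom f) => /=; rewrite ?mulr0 ?addr0 ?mulN1r ?addrN.
under eq_bigr do rewrite E2.
transitivity (\sum_(f : {ffun 'I_n -> 'I_n} | injectiveb f) \prod_i a i (f i)).
  by rewrite [RHS]big_mkcond; apply: eq_bigr => f _; case: (injectiveb f); rewrite ?mul1r ?mul0r.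
rewrite (reindex (fun s : 'S_n => pval s)) /=; last first.
  exists (fun f => insubd (1%g : {perm 'I_n}) f).
    by move=> s _; apply: valKd.
  by move=> f Hf; apply: insubdK.
rewrite (eq_bigl xpredT); last by move=> s; apply: (valP s).
by apply: eq_bigr => s _; apply: eq_bigr => i _; rewrite pvalE.
Qed.
End Ryser.



Lemma sum_reindex_perm (V : nmodType) (T : finType) n (F : {ffun 'I_n -> T} -> V) (s : 'S_n) :
  \sum_(t : {ffun 'I_n -> T}) F t = \sum_(t : {ffun 'I_n -> T}) F [ffun i => t (s i)].
Proof.
apply: reindex_inj => t1 t2 /ffunP H; apply/ffunP => j.
by have := H (s^-1 j)%g; rewrite !ffunE permKV.
Qed.

Section Main2.
Variables (k : fieldType) (B : comAlgType k) (G : gradedData B).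
Local Notation N := (gdim G).

Lemma sym_reindex e n (g : tensor G e n) (Hg : is_sym_tensor g) (V : lmodType k)
   (H : {ffun 'I_n -> 'I_(N e)} -> V) (s : 'S_n) :
  \sum_(t : {ffun 'I_n -> 'I_(N e)}) g t *: H [ffun i => t (s i)] = \sum_t g t *: H t.
Proof.
rewrite [RHS](sum_reindex_perm _ s); apply: eq_bigr => t _; by rewrite Hg.
Qed.

Lemma Lpol e n (g : tensor G e n) (Hg : is_sym_tensor g) m
   (Q : 'I_n -> 'I_(N e) -> {mpoly k[m]}) :
  n`!%:R *: \sum_t g t *: \prod_i Q i (t i) =
  \sum_t g t *: \sum_(eps : {ffun 'I_n -> bool})
     (\prod_x (if eps x then 1 else -1 : k)) *: \prod_i \sum_(j | eps j) Q i (t j).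
Proof.
transitivity (\sum_t g t *: \sum_(s : 'S_n) \prod_i Q i (t (s i))); last first.
  apply: eq_bigr => t _; congr (_ *: _); rewrite -(ryser (fun i j => Q i (t j))); apply: eq_bigr => eps _.
  rewrite -mul_mpolyC rmorph_prod; congr (_ * _); apply: eq_bigr => x _.
  by case: (eps x); rewrite ?rmorph1 ?rmorphN1.
under [RHS]eq_bigr do rewrite scaler_sumr.
rewrite [RHS]exchange_big /=.
transitivity (\sum_(s : 'S_n) \sum_t g t *: \prod_i Q i (t i)).
  by rewrite sumr_const card_Sn scaler_nat.
apply: eq_bigr => s _.
rewrite -(sym_reindex Hg (fun t : {ffun 'I_n -> 'I_(N e)} => \prod_i Q i (t i)) s).
by apply: eq_bigr => t _; congr (_ *: _); apply: eq_bigr => i _; rewrite ffunE.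
Qed.

End Main2.



Section Main3.
Variables (k : fieldType) (B : comAlgType k) (G : gradedData B).
Local Notation N := (gdim G).

Definition Pc e d (a : 'I_(N e)) (w : 'I_(N d) -> k) : 'I_(N (e + d)) -> k :=
  fun l => \sum_j w j * @mu _ _ G e d a j l.

Definition sprime e d n (g : tensor G e n) (s : seq (k * ('I_n -> 'I_(N d) -> k))) :
   seq (k * ('I_n -> 'I_(N (e + d)) -> k)) :=
  [seq (g z.2 * z.1.1, fun i => Pc (z.2 i) (z.1.2 i))
    | z <- [seq (y, t1) | y <- s, t1 <- enum {ffun 'I_n -> 'I_(N e)}]].

Lemma Srep_tmul e d n (g : tensor G e n) (Hg : is_sym_tensor g) (f : tensor G d n)
  (s : seq (k * ('I_n -> 'I_(N d) -> k))) (Hf : forall t, Srep s t = f t) t :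
  Srep (sprime g s) t = tmul g f t.
Proof.
rewrite /Srep /tmul /sprime big_map big_allpairs /=.
transitivity (\sum_(y <- s) \sum_(tau : 'S_n) \sum_(t1 : {ffun 'I_n -> 'I_(N e)})
   \sum_(t2 : {ffun 'I_n -> 'I_(N d)}) y.1 * g t1 *
     ((\prod_i y.2 (tau i) (t2 i)) * \prod_i mu (t1 i) (t2 i) (t i))).
  apply: eq_bigr => y _; rewrite big_enum /=.
  under eq_bigr do rewrite mulr_sumr.
  rewrite exchange_big /=; apply: eq_bigr => tau _.
  transitivity (\sum_(t1 : {ffun 'I_n -> 'I_(N e)}) y.1 * g t1 *
      \prod_i Pc (t1 i) (y.2 (tau i)) (t i)).
    rewrite [RHS](sum_reindex_perm _ tau); apply: eq_bigr => t1 _.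
    rewrite Hg [g t1 * y.1]mulrC; congr (_ * _); apply: eq_bigr => i _.
    by rewrite ffunE.
  apply: eq_bigr => t1 _; rewrite -mulr_sumr; congr (_ * _).
  rewrite /Pc bigA_distr_bigA /=; apply: eq_bigr => t2 _.
  by rewrite big_split.
symmetry.
transitivity (\sum_(t1 : {ffun 'I_n -> 'I_(N e)}) \sum_(t2 : {ffun 'I_n -> 'I_(N d)})
   \sum_(y <- s) \sum_(tau : 'S_n) y.1 * g t1 *
     ((\prod_i y.2 (tau i) (t2 i)) * \prod_i mu (t1 i) (t2 i) (t i))).
  apply: eq_bigr => t1 _; apply: eq_bigr => t2 _.
  rewrite -Hf /Srep mulrAC [_ * \sum_(y <- s) _]mulr_sumr; apply: eq_bigr => y _.
  rewrite mulrCA [_ * \sum_tau _]mulr_sumr mulr_sumr; apply: eq_bigr => tau _.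
  by rewrite -!mulrA; congr (_ * (_ * _)); exact: mulrC.
under eq_bigr do rewrite exchange_big /=.
rewrite exchange_big /=; apply: eq_bigr => y _.
under eq_bigr do rewrite exchange_big /=.
by rewrite exchange_big.
Qed.

Definition vv e n (t1 : {ffun 'I_n -> 'I_(N e)}) (eps : {ffun 'I_n -> bool}) (a : 'I_(N e)) : k :=
  \sum_(j | eps j) ((t1 j == a)%:R : k).

Lemma lin_eq e d n (t1 : {ffun 'I_n -> 'I_(N e)}) (eps : {ffun 'I_n -> bool}) (w : 'I_(N d) -> k) :
  \sum_(j | eps j) @symlin _ _ G (e + d) (Pc (t1 j) w) =
  \sum_j' w j' *: @lin _ _ G d e (vv t1 eps) j'.
Proof.
rewrite /symlin /lin /Pc exchange_big /=.
under [RHS]eq_bigr do rewrite scaler_sumr.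
rewrite [RHS]exchange_big /=; apply/eq_bigr => l _.
rewrite -scaler_suml.
under [RHS]eq_bigr do rewrite scalerA.
rewrite -scaler_suml; congr (_ *: _).
rewrite exchange_big /=; apply/eq_bigr => j' _; rewrite -mulr_sumr; congr (_ * _).
rewrite /vv; under [RHS]eq_bigr do rewrite mulr_suml.
rewrite [RHS]exchange_big /=; apply/eq_bigr => i _.
rewrite (bigD1 (t1 i)) //= eqxx mul1r big1 ?addr0 // => a /negbTE.
by rewrite eq_sym => ->; rewrite mul0r.
Qed.

Lemma sig_prod_symlin e d n (v : 'I_(N e) -> k) (w : 'I_n -> 'I_(N d) -> k) :
  @sig _ _ G d e v (\prod_i @symlin _ _ G d (w i)) =
  \prod_i \sum_j' w i j' *: @lin _ _ G d e v j'.
Proof.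
rewrite /sig rmorph_prod; apply: eq_bigr => i _.
by rewrite /= /symlin mmap_symlin.
Qed.

Lemma sig_sumZ d e (v : 'I_(N e) -> k) (T : Type) (r : seq T) (c : T -> k) (P : T -> {mpoly k[N d]}) :
  @sig _ _ G d e v (\sum_(x <- r) c x *: P x) = \sum_(x <- r) c x *: @sig _ _ G d e v (P x).
Proof.
rewrite /sig raddf_sum; apply: eq_bigr => x _.
by rewrite /= mmapZ mul_mpolyC.
Qed.

Lemma symrep_sprime e d n (g : tensor G e n) (Hg : is_sym_tensor g)
  (s : seq (k * ('I_n -> 'I_(N d) -> k))) :
  n`!%:R *: symrep (sprime g s) =
  \sum_(t1 : {ffun 'I_n -> 'I_(N e)}) \sum_(eps : {ffun 'I_n -> bool})
     (g t1 * \prod_x (if eps x then 1 else -1)) *: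
        @sig _ _ G d e (vv t1 eps) (symrep s).
Proof.
transitivity (\sum_(y <- s) \sum_(t1 : {ffun 'I_n -> 'I_(N e)}) \sum_(eps : {ffun 'I_n -> bool})
     (y.1 * (g t1 * \prod_x (if eps x then 1 else -1))) *:
        @sig _ _ G d e (vv t1 eps) (\prod_i @symlin _ _ G d (y.2 i))).
  rewrite /symrep /sprime big_map big_allpairs scaler_sumr; apply: eq_bigr => y _.
  rewrite big_enum /=.
  transitivity (y.1 *: (n`!%:R *: \sum_(t1 : {ffun 'I_n -> 'I_(N e)}) g t1 *:
       \prod_i @symlin _ _ G (e + d) (Pc (t1 i) (y.2 i)))).
    rewrite scalerA mulrC -scalerA; congr (_ *: _); rewrite scaler_sumr.
    by apply: eq_bigr => t1 _; rewrite scalerA mulrC.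
  rewrite (Lpol Hg (fun i a => @symlin _ _ G (e + d) (Pc a (y.2 i)))) scaler_sumr.
  apply: eq_bigr => t1 _; rewrite scalerA scaler_sumr; apply: eq_bigr => eps _.
  rewrite scalerA mulrA sig_prod_symlin; congr (_ *: _).
  by apply: eq_bigr => i _; rewrite lin_eq.
rewrite exchange_big /=; apply: eq_bigr => t1 _.
rewrite exchange_big /=; apply: eq_bigr => eps _.
rewrite /symrep (sig_sumZ _ _ (fun y : k * ('I_n -> 'I_(N d) -> k) => y.1) (fun y : k * ('I_n -> 'I_(N d) -> k) => \prod_i @symlin _ _ G d (y.2 i))) scaler_sumr.
apply: eq_bigr => y _.
by rewrite scalerA mulrC.
Qed.
End Main3.



Lemma diideal_main (k : fieldType) (B : comAlgType k) (G : gradedData B)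
  (char0 : [pchar k] =i pred0) (I : Defs.family G) (HI : is_ideal I) (HS : sig_closed I) :
  forall d e n (f : tensor G d n) (g : tensor G e n),
    in_SI I f -> is_sym_tensor g -> in_SI I (tmul g f).
Proof.
move=> d e n f g [s [Is Hf]] Hg; exists (sprime g s); split; last first.
  by move=> t; apply: Srep_tmul.
have nz : n`!%:R != 0 :> k.
  by rewrite ((GRing.pcharf0P k).1 char0) -lt0n fact_gt0.
have -> : symrep (sprime g s) = n`!%:R^-1 *: (n`!%:R *: symrep (sprime g s)).
  by rewrite scalerA mulVf // scale1r.
rewrite symrep_sprime //.
apply: (HI _ _).2.2.2.1.
apply: ideal_sum => // t1 _; apply: ideal_sum => // eps _.
apply: (HI _ _).2.2.2.1; exact: HS.
Qed.

Unset Implicit Arguments.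
Theorem proposition4p3 (k : fieldType) (B : comAlgType k) (G : gradedData B)
  (char0 : [pchar k] =i pred0) (HB : is_graded_alg G) (r : nat) (hr : (0 < r)%N) :
  is_diideal (IB G r).
Proof.
case: r hr => // r _; have [Hi Hs] := IB_ideal_sig HB r.
split=> //; exact: diideal_main.
Qed.
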